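(* Let $G$ be a block graph with at least one edge and let $H$ be a maximal threshold subgraph of $G$. Then there exist a block $Q$ of $G$ and a vertex $u\in V(Q)$ such that $E(H)=E(Q_u(G))$.
   Context: All graphs are finite and simple. A block is a maximal connected subgraph with no cut-vertex of its own; a block graph is a graph whose blocks are all complete. For a clique $Q$ in $G$ and $u\in V(Q)$, $Q_u(G)=\big(V(Q)\cup N_G(u),\ E(Q)\cup\delta_G(u)\big)$, where $N_G(u)$ is the neighbourhood and $\delta_G(u)$ the incident edge set of $u$. A threshold graph is a graph obtainable from a single vertex by repeatedly adding an isolated or a universal vertex; equivalently, a graph with no induced $P_4$, $C_4$ or $2K_2$. A threshold subgraph $H$ of $G$ is maximal if no threshold subgraph $H'$ of $G$ satisfies $E(H)\subsetneq E(H')$. *)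

(* Defs.v *)
(* A finite simple graph is a symmetric irreflexive relation
   e : rel T on a finType T. Edges are represented as 2-element vertex sets. *)
From mathcomp Require Import all_boot.
Set Implicit Arguments. Unset Strict Implicit. Unset Printing Implicit Defensive.

Section Graphs.
Variable T : finType.

Definition simple_graph (e : rel T) : Prop := symmetric e /\ irreflexive e.

Definition gedges (e : rel T) : {set {set T}} :=
  [set f : {set T} | [exists x : T, exists y : T, e x y && (f == [set x; y])]].

(* G[S] is connected (the empty graph counts as connected) *)
Definition connected_on (e : rel T) (S : {set T}) : Prop :=
  forall x y, x \in S -> y \in S ->
    connect [rel a b | [&& e a b, a \in S & b \in S]] x y.

Definition biconn_on (e : rel T) (S : {set T}) : Prop :=
  S != set0 /\ connected_on e S /\
  (forall v, v \in S -> connected_on e (S :\ v)).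

(* a block: a maximal such vertex set (maximal such subgraphs are induced) *)
Definition is_block (e : rel T) (B : {set T}) : Prop :=
  biconn_on e B /\ (forall B' : {set T}, B \subset B' -> biconn_on e B' -> B' = B).

Definition is_clique (e : rel T) (Q : {set T}) : Prop :=
  forall x y, x \in Q -> y \in Q -> x != y -> e x y.

Definition block_graph (e : rel T) : Prop :=
  simple_graph e /\ forall B, is_block e B -> is_clique e B.

(* Graphs (V, F) built from a single vertex by repeatedly adding an isolated
   or a universal vertex. *)
Inductive threshold_build : {set T} -> {set {set T}} -> Prop :=
| thr_single : forall v, threshold_build [set v] set0
| thr_add : forall (S : {set T}) (F : {set {set T}}) v, v \in S ->
    threshold_build (S :\ v) [set f in F | v \notin f] ->
    ((forall f, f \in F -> v \notin f) \/
     (forall w, w \in S -> w != v -> [set v; w] \in F)) ->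
    threshold_build S F.

Definition threshold_graph (V : {set T}) (F : {set {set T}}) : Prop :=
  (forall f, f \in F -> exists x y, [/\ x != y, x \in V, y \in V & f = [set x; y]])
  /\ threshold_build V F.

Definition threshold_subgraph (e : rel T) (V : {set T}) (F : {set {set T}}) : Prop :=
  F \subset gedges e /\ threshold_graph V F.

Definition maximal_threshold_subgraph (e : rel T) (V : {set T}) (F : {set {set T}}) : Prop :=
  threshold_subgraph e V F /\
  (forall (V' : {set T}) (F' : {set {set T}}), threshold_subgraph e V' F' -> ~ (F \proper F')).

Definition Qu_edges (e : rel T) (Q : {set T}) (u : T) : {set {set T}} :=
  [set f : {set T} | [exists x in Q, exists y in Q, (x != y) && (f == [set x; y])]]
  :|: [set f : {set T} | [exists w : T, e u w && (f == [set u; w])]].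

End Graphs.

(* Main.v *)
Require Import Defs.
From mathcomp Require Import all_boot zify.
From Stdlib Require Classical_Prop.
Set Implicit Arguments. Unset Strict Implicit. Unset Printing Implicit Defensive.

Section L.
Variable T : finType.
Implicit Types (S W C : {set T}) (F : {set {set T}}) (e : rel T).

Lemma thr_props S F : threshold_build S F ->
  (forall f, f \in F -> f \subset S /\ f != set0) ->
  (exists u, forall f, f \in F -> u \in f \/ forall x, x \in f -> [set u; x] \in F) /\
  (forall f1 f2, f1 \in F -> f2 \in F -> (forall z, z \in f1 -> z \notin f2) ->
     exists a b, [/\ a \in f1, b \in f2 & [set a; b] \in F]).
Proof.
elim=> {S F} [v|S F v vS _ IH [iso|uni]] sub.
- split; first by exists v => f; rewrite inE.
  by move=> f1 f2; rewrite inE.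
- have EF : [set f in F | v \notin f] = F.
    by apply/setP=> f; rewrite inE; case fF: (f \in F) => //=; rewrite iso.
  move: IH; rewrite EF; apply=> f fF; have [s1 s2] := sub f fF; split=> //.
  apply/subsetP=> x xf.
  rewrite !inE (subsetP s1 x xf) andbT.
  by apply: contraNneq (iso f fF) => <-.
- have sub' : forall f, f \in [set f in F | v \notin f] -> f \subset S :\ v /\ f != set0.
    move=> f; rewrite inE => /andP[fF vf]; have [s1 s2] := sub f fF; split=> //.
    apply/subsetP=> x xf.
    rewrite !inE (subsetP s1 x xf) andbT.
    by apply: contraNneq vf => <-.
  have [_ IH2] := IH sub'.
  split.
    exists v => f fF; case vf: (v \in f); first by left.
    right=> x xf; apply: uni; first exact: (subsetP (sub f fF).1).
    by apply: contraFneq vf => <-.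
  move=> f1 f2 f1F f2F dis.
  case v1: (v \in f1).
    have [x xf2] := set0Pn _ (sub f2 f2F).2.
    exists v, x; split=> //; apply: uni; first exact: (subsetP (sub f2 f2F).1).
    by apply: contraTneq xf2 => ->; apply: dis.
  case v2: (v \in f2).
    have [x xf1] := set0Pn _ (sub f1 f1F).2.
    exists x, v; split=> //; rewrite setUC; apply: uni; first exact: (subsetP (sub f1 f1F).1).
    by apply: contraFneq v1 => <-.
  have h1 : f1 \in [set f in F | v \notin f] by rewrite inE f1F v1.
  have h2 : f2 \in [set f in F | v \notin f] by rewrite inE f2F v2.
  have [a [b [af bf abF]]] := IH2 f1 f2 h1 h2 dis.
  by exists a, b; split=> //; move: abF; rewrite inE => /andP[].
Qed.

Definition pairs C : {set {set T}} :=
  [set f : {set T} | [exists x in C, exists y in C, (x != y) && (f == [set x; y])]].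

Lemma pairsP C f : reflect (exists x y, [/\ x \in C, y \in C, x != y & f = [set x; y]]) (f \in pairs C).
Proof.
rewrite inE; apply: (iffP idP).
  by case/existsP=> x /andP[xC /existsP[y /andP[yC /andP[xy /eqP ->]]]]; exists x, y.
case=> x [y [xC yC xy ->]]; apply/existsP; exists x; rewrite xC /=.
by apply/existsP; exists y; rewrite yC xy eqxx.
Qed.

Lemma pairs_build n W C : #|W| = n.+1 -> C \subset W -> threshold_build W (pairs C).
Proof.
elim: n W C => [|n IH] W C cW CW.
  have /cards1P[v Wv] : #|W| == 1 by rewrite cW.
  have -> : pairs C = set0.
    apply/setP=> f; rewrite [in RHS]inE; apply/negP=> /pairsP[x [y [xC yC xy _]]].
    move: (subsetP CW x xC) (subsetP CW y yC); rewrite Wv !inE => /eqP ex /eqP ey.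
    by rewrite ex ey eqxx in xy.
  by rewrite Wv; apply: thr_single.
case: (boolP [exists v, (v \in W) && (v \notin C)]) => [vWC|].
  case/existsP: vWC => v /andP[vW vC].
  have cW' : #|W :\ v| = n.+1 by move: cW; rewrite (cardsD1 v) vW => -[].
  have CW' : C \subset W :\ v.
    apply/subsetP=> x xC; rewrite !inE (subsetP CW x xC) andbT.
    by apply: contraNneq vC => <-.
  have iso : forall f, f \in pairs C -> v \notin f.
    move=> f /pairsP[x [y [xC yC _ ->]]]; rewrite !inE.
    by apply/negP=> /orP[] /eqP E; move: vC; rewrite E ?xC ?yC.
  have EF : [set f in pairs C | v \notin f] = pairs C.
    by apply/setP=> f; rewrite inE; case fF: (f \in pairs C) => //=; rewrite iso.
  apply: (thr_add vW); first by rewrite EF; exact: IH cW' CW'.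
  by left.
move/existsPn=> H.
have WC : W \subset C by apply/subsetP=> x xW; move: (H x); rewrite xW /= negbK.
have [v vW] : exists v, v \in W by apply/set0Pn; rewrite -card_gt0 cW.
have cW' : #|W :\ v| = n.+1 by move: cW; rewrite (cardsD1 v) vW => -[].
have EF : [set f in pairs C | v \notin f] = pairs (C :\ v).
  apply/setP=> f; rewrite inE; apply/idP/idP.
    case/andP=> /pairsP[x [y [xC yC xy Ef]]] vf; apply/pairsP; exists x, y.
    move: vf; rewrite Ef !inE negb_or => /andP[vx vy].
    by rewrite xC yC xy eq_sym vx eq_sym vy.
  case/pairsP=> x [y [xC yC xy ->]]; move: xC yC => /setD1P[xv xC] /setD1P[yv yC].
  apply/andP; split; first by apply/pairsP; exists x, y.
  by rewrite !inE negb_or eq_sym xv eq_sym yv.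
have CW' : C :\ v \subset W :\ v by apply: setSD; apply/subsetP=> x /(subsetP CW).
apply: (thr_add vW); first by rewrite EF; exact: IH cW' CW'.
right=> w wW wv; apply/pairsP; exists v, w; split=> //; try exact: (subsetP WC).
by rewrite eq_sym.
Qed.


Lemma in_gedges e f : f \in gedges e -> exists a b, e a b /\ f = [set a; b].
Proof.
by rewrite inE => /existsP[a /existsP[b /andP[ab /eqP ->]]]; exists a, b.
Qed.

Lemma pair_gedges e x y : e x y -> [set x; y] \in gedges e.
Proof.
by move=> xy; rewrite inE; apply/existsP; exists x; apply/existsP; exists y; rewrite xy eqxx.
Qed.

Lemma gedge_pair e x y : simple_graph e -> [set x; y] \in gedges e -> e x y.
Proof.
case=> sym irr /in_gedges[a [b [ab E]]].
have xa : x \in [set a; b] by rewrite -E !inE eqxx.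
have ya : y \in [set a; b] by rewrite -E !inE eqxx orbT.
have aa : a \in [set x; y] by rewrite E !inE eqxx.
have bb : b \in [set x; y] by rewrite E !inE eqxx orbT.
move: xa ya aa bb; rewrite !inE => /orP[]/eqP-> /orP[]/eqP-> //.
- by move=> _ /orP[]/eqP bE; rewrite bE irr in ab.
- by rewrite sym.
- by move=> /orP[]/eqP aE; rewrite aE irr in ab.
Qed.

Lemma via_hub e (A : {set T}) u : symmetric e -> u \in A -> (forall x, x \in A -> x != u -> e u x) ->
  connected_on e A.
Proof.
move=> sym uA hub x y xA yA.
have h : forall z, z \in A -> connect [rel a b | [&& e a b, a \in A & b \in A]] u z.
  move=> z zA; case: (eqVneq z u) => [->|zu]; first exact: connect0.
  by apply: connect1; rewrite /= hub // uA zA.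
apply: connect_trans (h y yA).
rewrite sym_connect_sym; first exact: h.
by move=> a b /=; rewrite sym; case: (a \in A); case: (b \in A); rewrite ?andbF ?andbT. 
Qed.

Lemma bi_hub e S u : symmetric e -> u \in S -> (forall x, x \in S -> x != u -> e u x) ->
  connected_on e (S :\ u) -> biconn_on e S.
Proof.
move=> sym uS hub cS; split; first by apply/set0Pn; exists u.
split; first exact: via_hub sym uS hub.
move=> v vS; case: (eqVneq v u) => [->//|vu].
apply: (via_hub (u := u)) => //; first by rewrite !inE eq_sym vu.
by move=> x /setD1P[_ xS]; apply: hub.
Qed.

Lemma block_exists e S : biconn_on e S -> exists B, is_block e B /\ S \subset B.
Proof.
move=> bS.
suff H : forall n (B : {set T}), #|T| - #|B| <= n -> S \subset B -> biconn_on e B ->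
   exists B0, is_block e B0 /\ S \subset B0 by exact: (H _ S (leqnn _) (subxx _) bS).
elim=> [|n IH] B cB SB bB.
  exists B; split=> //; split=> // B' BB' _.
  apply/eqP; rewrite eq_sym eqEcard BB' /=.
  by apply: leq_trans (max_card _) _; rewrite -subn_eq0 -leqn0.
case: (Classical_Prop.classic (forall B' : {set T}, B \subset B' -> biconn_on e B' -> B' = B)) => Hm.
  by exists B.
have [B' [BB' [bB' neq]]] : exists B' : {set T}, B \subset B' /\ biconn_on e B' /\ B' <> B.
  apply: Classical_Prop.NNPP => Hn; apply: Hm => B' BB' bB'.
  by apply: Classical_Prop.NNPP => ne; apply: Hn; exists B'.
apply: (IH B') => //; last exact: subset_trans SB BB'.
have pr : B \proper B' by rewrite properEneq BB' andbT; apply/eqP=> E; apply: neq.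
have := proper_card pr; move: cB (max_card B'); lia.
Qed.


Lemma QuP e Q u f : reflect (f \in pairs Q \/ exists w, e u w /\ f = [set u; w])
  (f \in Qu_edges e Q u).
Proof.
rewrite /Qu_edges in_setU [f \in pairs Q]inE [f \in [set f0 | _]]inE.
apply: (iffP orP) => -[H|H]; [by left | right | by left | right].
  by case/existsP: H => w /andP[uw /eqP ->]; exists w.
by case: H => w [uw ->]; apply/existsP; exists w; rewrite uw eqxx.
Qed.

End L.

Theorem lemma14 (T : finType) (e : rel T) (V : {set T}) (F : {set {set T}}) :
  block_graph e ->
  (exists x y, e x y) ->
  maximal_threshold_subgraph e V F ->
  exists Q : {set T}, exists2 u : T,
    is_block e Q & u \in Q /\ F = Qu_edges e Q u.
Proof.
move=> [[sym irr] Hcl] [x0 [y0 e0]] [[Fsub [Fwf Fbuild]] Hmaxp].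
have simp : simple_graph e := conj sym irr.
have inv : forall f, f \in F -> f \subset V /\ f != set0.
  move=> f /Fwf[x [y [_ xV yV ->]]]; split.
    by apply/subsetP=> z; rewrite !inE => /orP[]/eqP->.
  by apply/set0Pn; exists x; rewrite !inE eqxx.
have [[u0 HT1] HT2] := thr_props Fbuild inv.
have [u [[w uw] HT]] : exists u, (exists w, e u w) /\
    forall f, f \in F -> u \in f \/ forall x, x \in f -> [set u; x] \in F.
  have [F0|/set0Pn[f fF]] := eqVneq F set0.
    exists x0; split; first by exists y0.
    by rewrite F0 => f; rewrite inE.
  exists u0; split=> //.
  have [a [b [ab Ef]]] := in_gedges (subsetP Fsub f fF).
  case: (HT1 f fF) => [uf|H].
    by move: uf; rewrite Ef !inE => /orP[]/eqP->; [exists b | exists a; rewrite sym].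
  exists a; apply: gedge_pair simp _; apply: (subsetP Fsub); apply: H.
  by rewrite Ef !inE eqxx.
set K := u |: [set x | [exists f in F, (u \notin f) && (x \in f)]].
have inK : forall f x, f \in F -> u \notin f -> x \in f -> x \in K :\ u.
  move=> f x fF uf xf; apply/setD1P; split.
    by apply: contraNneq uf => <-.
  by apply/setU1P; right; rewrite inE; apply/existsP; exists f; rewrite fF uf xf.
have Kf : forall x, x \in K -> x != u -> exists2 f, f \in F & u \notin f /\ x \in f.
  move=> x /setU1P[->|]; first by rewrite eqxx.
  by rewrite inE => /existsP[f /andP[fF /andP[uf xf]]] _; exists f.
have hub : forall x, x \in K -> x != u -> e u x.
  move=> x xK xu; have [f fF [uf xf]] := Kf x xK xu.
  case: (HT f fF) => [uf'|H]; first by rewrite uf' in uf.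
  by apply: gedge_pair simp _; apply: (subsetP Fsub); exact: H.
set R := [rel a b | [&& e a b, a \in K :\ u & b \in K :\ u]].
have inedge : forall f p q, f \in F -> u \notin f -> p \in f -> q \in f -> connect R p q.
  move=> f p q fF uf pf qf; case: (eqVneq p q) => [->|pq]; first exact: connect0.
  apply: connect1; rewrite /= (inK f p) // (inK f q) // andbT.
  have [a [b [ab Ef]]] := in_gedges (subsetP Fsub f fF).
  move: pf qf pq; rewrite Ef !inE => /orP[]/eqP-> /orP[]/eqP->; rewrite ?eqxx ?andbT //.
  by rewrite sym.
have cK : connected_on e (K :\ u).
  move=> x y /setD1P[xu xK] /setD1P[yu yK].
  have [f1 f1F [uf1 xf1]] := Kf x xK xu.
  have [f2 f2F [uf2 yf2]] := Kf y yK yu.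
  case: (boolP [exists z, (z \in f1) && (z \in f2)]) => [/existsP[z /andP[z1 z2]]|/existsPn dis].
    exact: connect_trans (inedge f1 x z f1F uf1 xf1 z1) (inedge f2 z y f2F uf2 z2 yf2).
  have dis' : forall z, z \in f1 -> z \notin f2 by move=> z z1; move: (dis z); rewrite z1.
  have [a [b [af bf abF]]] := HT2 f1 f2 f1F f2F dis'.
  apply: connect_trans (inedge f1 x a f1F uf1 xf1 af) _.
  apply: connect_trans _ (inedge f2 b y f2F uf2 bf yf2).
  apply: connect1; rewrite /= (inK f1 a) // (inK f2 b) // andbT.
  rewrite ?andbT; by apply: gedge_pair simp _; exact: (subsetP Fsub _ abF).
have uK : u \in K by rewrite !inE eqxx.
have bK : biconn_on e K := bi_hub sym uK hub cK.
have [Q [bQ KQ]] := block_exists bK.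
have cQ := Hcl Q bQ.
have uQ : u \in Q := subsetP KQ u uK.
exists Q, u => //; split=> //.
have FQ : F \subset Qu_edges e Q u.
  apply/subsetP=> f fF; have [a [b [ab Ef]]] := in_gedges (subsetP Fsub f fF).
  apply/QuP; case uf: (u \in f).
    right; move: uf; rewrite Ef !inE => /orP[]/eqP ua; subst.
      by exists b.
    by exists a; rewrite sym setUC.
  left; apply/pairsP; exists a, b.
  split=> //.
  - have af : a \in f by rewrite Ef !inE eqxx.
    have /setD1P[_ aK] := inK f a fF (negbT uf) af.
    exact: (subsetP KQ).
  - have bf : b \in f by rewrite Ef !inE eqxx orbT.
    have /setD1P[_ bK0] := inK f b fF (negbT uf) bf.
    exact: (subsetP KQ).
  - by apply: contraTneq ab => ->; rewrite irr.
set W := (Q :\ u) :|: [set x | e u x].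
have uW : u \notin W by rewrite !inE eqxx irr.
have wW : w \in W by rewrite !inE uw orbT.
have thrQ : threshold_subgraph e (u |: W) (Qu_edges e Q u).
  split.
    apply/subsetP=> f /QuP[/pairsP[x [y [xQ yQ xy ->]]] | [w' [uw' ->]]]; apply: pair_gedges => //.
    exact: cQ.
  have inV : forall z, z \in Q -> z \in u |: W.
    by move=> z zQ; rewrite !inE zQ andbT; case: eqP.
  split.
    move=> f /QuP[/pairsP[x [y [xQ yQ xy ->]]] | [w' [uw' ->]]].
      by exists x, y; split=> //; apply: inV.
    exists u, w'; split; rewrite ?inE ?eqxx ?uw' ?orbT //.
    by apply: contraTneq uw' => <-; rewrite irr.
  apply: (@thr_add _ _ _ u); first by rewrite !inE eqxx.
    rewrite setU1K //.
    have -> : [set f in Qu_edges e Q u | u \notin f] = pairs (Q :\ u).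
      apply/setP=> f; rewrite inE; apply/idP/idP.
        case/andP=> /QuP[/pairsP[x [y [xQ yQ xy Ef]]] | [w' [_ Ef]]] uf.
          apply/pairsP; exists x, y; move: uf; rewrite Ef !inE negb_or => /andP[ux uy].
          by rewrite xQ yQ xy eq_sym ux eq_sym uy.
        by rewrite Ef !inE eqxx in uf.
      case/pairsP=> x [y [xQ yQ xy ->]]; move: xQ yQ => /setD1P[xu xQ] /setD1P[yu yQ].
      apply/andP; split; first by apply/QuP; left; apply/pairsP; exists x, y.
      by rewrite !inE negb_or eq_sym xu eq_sym yu.
    have : 0 < #|W| by rewrite card_gt0; apply/set0Pn; exists w.
    case cW: #|W| => [|n] // _.
    by apply: (pairs_build cW); apply/subsetP=> z zQ; rewrite inE zQ.
  right=> z /setU1P[->|zW]; first by rewrite eqxx.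
  move=> zu; apply/QuP; case/setUP: zW => [/setD1P[_ zQ]|].
    by left; apply/pairsP; exists u, z; rewrite eq_sym.
  by rewrite inE => uz; right; exists z.
by case: (eqVproper FQ) => // pr; case: (Hmaxp _ _ thrQ).
Qed.
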